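(* Let $\mathcal{W}_0=\mathcal{X}-\hat{\mathcal{X}}_0$. Suppose $\{{\bf R}^{(n)}_k\}$ form an effective partition of $\mathcal{W}_0$ with respect to pessimistic restriction matrices $\{\tilde{\bf R}^{(n)}_k\}$, i.e. there is a bijection $f:[K]\to[K]$ with, for each $k\in[K]$, $$\sum_{n=1}^N \left\| \mathcal{X}|_k\times_n \left({\bf I} - {\bf Q}^{(n)}_k \right) \right\|^2\leq \sum_{n=1}^N \left\| \mathcal{W}_0 \times_n \tilde{\bf R}_{f(k)}^{(n)} \left({\bf I}-\tilde{\bf P}^{(n)} \right) \times_{1} \tilde{\bf R}_{f(k)}^{(1)} \cdots \times_{n-1} \tilde{\bf R}_{f(k)}^{(n-1)} \times_{n+1} \tilde{\bf R}_{f(k)}^{(n+1)} \cdots \times_N \tilde{\bf R}_{f(k)}^{(N)}\right\|^2 ,$$ where $\tilde{\bf P}^{(n)}$ are the rank-$\tilde r_n$ ($\tilde r_n\geq\bar r_n\geq r_n$) orthogonal projections from the truncated HoSVD of $\mathcal{W}_0$. Then $$\left\| \mathcal{W}_0 - \hat{\mathcal{X}}_1 \right\|^2 = \left\| \left( \mathcal{X} - \hat{\mathcal{X}}_0 \right) - \sum^K_{k = 1} \left( \mathcal{X} - \hat{\mathcal{X}}_0 \right) \times_1 {\bf Q}^{(1)}_k \times_2 \cdots \times_N {\bf Q}^{(N)}_k \right\|^2\leq \sum_{n=1}^N \left\| \left( \mathcal{X} - \hat{\mathcal{X}}_0 \right) \times_n \left( {\bf I}-\tilde{\bf P}^{(n)}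 \right)\right\|^2.$$
   Context: Let $\mathcal{X}\in\mathbb{R}^{I_1\times\cdots\times I_N}$, with $\times_n$ the mode-$n$ product and $\|\cdot\|$ the Frobenius tensor norm. For each $n$, ${\bf P}^{(n)}$ is the orthogonal projection onto the top $r_n$ left singular vectors of the mode-$n$ matricization ${\bf X}_{(n)}$, and $\hat{\mathcal{X}}_0=\mathcal{X}\times_1{\bf P}^{(1)}\times_2\cdots\times_N{\bf P}^{(N)}$. Index sets $J^n_{1,k}\subseteq[I_n]$, $k\in[K]$, are such that the blocks $J^1_{1,k}\times\cdots\times J^N_{1,k}$ are pairwise disjoint and cover all indices; ${\bf R}^{(n)}_k\in\{0,1\}^{I_n\times I_n}$ is diagonal with ${\bf R}^{(n)}_k(i,i)=1$ iff $i\in J^n_{1,k}$, and $\mathcal{X}|_k=\mathcal{W}_0\times_1{\bf R}^{(1)}_k\times_2\cdots\times_N{\bf R}^{(N)}_k$. ${\bf Q}^{(n)}_k$ is the orthogonal projection onto the top $r^{(n)}_k$ left singular vectors of the mode-$n$ matricization of $\mathcal{X}|_k$, and $\hat{\mathcal{X}}_1=\sum_{k=1}^K\mathcal{W}_0\times_1{\bf Q}^{(1)}_k\times_2\cdots\times_N{\bf Q}^{(N)}_k$. The pessimistic matrices $\tilde{\bf R}^{(n)}_k$ are diagonal 0/1 matrices defining another partition of $\mathcal{W}_0$ into $K$ disjoint subtensors in the same manner; $\tilde{\bf P}^{(n)}$ projects onto the top $\tilde r_n$ left singular vectors of ${\bf W}_{0,(n)}$, and $\bar r_n$ is the rank of the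 truncated HoSVD projections of $\mathcal{X}$ used for comparison. *)

(* Defs.v *)
From HB Require Import structures.
From mathcomp Require Import all_boot all_order all_algebra.
Unset Printing Implicit Defensive.
Import Order.TTheory GRing.Theory Num.Theory.
Local Open Scope ring_scope.

Section Tensors.
Variables (R : realFieldType) (N : nat) (I : 'I_N -> nat).

Notation idx := {dffun forall n : 'I_N, 'I_(I n)}.

Definition tensor := idx -> R.

Definition setc (i : idx) (n : 'I_N) (b : 'I_(I n)) : idx :=
  finfun (dfwith (fun m => i m) b).

Definition mode_prod (X : tensor) (n : 'I_N) (M : 'M[R]_(I n)) : tensor :=
  fun i => \sum_(b : 'I_(I n)) M (i n) b * X (setc i n b).

Definition mprod (X : tensor) (M : forall n : 'I_N, 'M[R]_(I n)) : tensor :=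
  foldl (fun Y n => mode_prod Y n (M n)) X (enum 'I_N).

Definition tsub (X Y : tensor) : tensor := fun i => X i - Y i.

Definition tnorm2 (X : tensor) : R := \sum_(i : idx) X i ^+ 2.

(* Gram matrix X_(n) X_(n)^T of the mode-n matricization X_(n):
   the columns of X_(n) are the mode-n fibres, i.e. for a fixed
   multi-index i the column (X (setc i n a))_a; summing over the
   i with i_n = a enumerates each column exactly once. *)
Definition mode_gram (X : tensor) (n : 'I_N) : 'M[R]_(I n) :=
  \matrix_(a, b) \sum_(i : idx | i n == a) X i * X (setc i n b).

End Tensors.

(* P is the orthogonal projection onto the span of the top r left singular
   vectors of a matrix A, given through its Gram matrix G = A A^T:
   the left singular vectors of A are an orthonormal eigenbasis U of A A^T
   (eigenvalues sigma_i^2), listed by non-increasing singular value, and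
   P = U_r U_r^T where U_r are the first r columns of U. *)
Definition top_lsv_proj (R : realFieldType) (m : nat) (G : 'M[R]_m) (r : nat)
    (P : 'M[R]_m) : Prop :=
  exists (U : 'M[R]_m) (d : 'I_m -> R),
    [/\ U^T *m U = 1%:M,
        G *m U = U *m diag_mx (\row_i d i),
        (forall i j : 'I_m, (i <= j)%N -> d j <= d i) &
        P = U *m pid_mx r *m U^T].

Definition restr (R : realFieldType) (m : nat) (J : {set 'I_m}) : 'M[R]_m :=
  diag_mx (\row_i (i \in J)%:R).

Definition block_partition (N : nat) (I : 'I_N -> nat) (K : nat)
    (J : forall n : 'I_N, 'I_K -> {set 'I_(I n)}) : Prop :=
  (forall i : {dffun forall n : 'I_N, 'I_(I n)}, exists k : 'I_K, forall n, i n \in J n k) /\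
  (forall (i : {dffun forall n : 'I_N, 'I_(I n)}) (k k' : 'I_K),
      (forall n, i n \in J n k) -> (forall n, i n \in J n k') -> k = k').

Arguments setc {N I} i n b.
Arguments mode_prod {R N I} X n M.
Arguments mode_gram {R N I} X n.
Arguments mprod {R N I} X M.
Arguments tsub {R N I} X Y.
Arguments tnorm2 {R N I} X.
Arguments top_lsv_proj {R m} G r P.
Arguments restr R {m} J.
Arguments block_partition {N I K} J.
Arguments tensor R {N} I.

(* Main.v *)
Require Import Defs.
From HB Require Import structures.
From mathcomp Require Import all_boot all_order all_algebra.
From Stdlib Require Import FunctionalExtensionality.
Import Order.TTheory GRing.Theory Num.Theory.
Local Open Scope ring_scope.

Section S.
Variables (R : realFieldType) (N : nat) (I : 'I_N -> nat).
Local Notation idx := {dffun forall n : 'I_N, 'I_(I n)}.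
Local Notation mats := (forall n : 'I_N, 'M[R]_(I n)).

Lemma distr_dep (F : forall n : 'I_N, 'I_(I n) -> R) :
  \sum_(b : idx) \prod_(n < N) F n (b n) = \prod_(n < N) \sum_(a : 'I_(I n)) F n a.
Proof.
rewrite (reindex (@dffun_of_fprod _ (fun n => 'I_(I n)))); last first.
  by apply: onW_bij; exact: dffun_of_fprod_bij.
have := @big_fprod R 0 1 *%R +%R _ (fun n => 'I_(I n)) (fun n => [ffun a => F n a]).
move=> H.
transitivity (\sum_(t : fprod (fun n => 'I_(I n))) \prod_(n in 'I_N) [ffun a => F n a] (t n)).
  by apply: eq_bigr => t _; apply: eq_bigr => n _; rewrite !ffunE.
rewrite H.
transitivity (\prod_(n < N) \sum_(a : 'I_(I n)) [ffun a => F n a] a); last first.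
  by apply: eq_bigr => n _; apply: eq_bigr => a _; rewrite ffunE.
under [RHS]eq_bigr do rewrite (big_tag (fun n a => [ffun a => F n a] a)).
rewrite (bigA_distr_big_dep _ (fun i j => untag 0 [ffun a => F i a] j)).
by [].
Qed.

Definition G (X : tensor R I) (M : mats) : tensor R I :=
  fun i => \sum_(b : idx) (\prod_(n < N) M n (i n) (b n)) * X b.
Definition upd1 (n : 'I_N) (A : 'M[R]_(I n)) : mats :=
  @dfwith 'I_N (fun m => 'M[R]_(I m)) (fun m => 1%:M) n A.
Definition ip (X Y : tensor R I) := \sum_(i : idx) X i * Y i.

Lemma G_ext X (M1 M2 : mats) : (forall n, M1 n = M2 n) -> G X M1 = G X M2.
Proof.
move=> h; apply: functional_extensionality => i; apply: eq_bigr => b _.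
by congr (_ * _); apply: eq_bigr => n _; rewrite h.
Qed.

Lemma G_comp X (A B C : mats) : (forall n, C n = A n *m B n) -> G (G X B) A = G X C.
Proof.
move=> hC; apply: functional_extensionality => i; rewrite /G.
under eq_bigr do rewrite big_distrr /=.
rewrite exchange_big /=; apply: eq_bigr => c _.
under eq_bigr do rewrite mulrA.
rewrite -big_distrl /=; congr (_ * _).
under eq_bigr do rewrite -big_split /=.
rewrite (distr_dep (fun n a => A n (i n) a * B n a (c n))); apply: eq_bigr => n _; rewrite hC mxE.
by apply: eq_bigr.
Qed.

Lemma neq_idx {i b : idx} : b != i -> exists n, i n != b n.
Proof.
move=> hb; case: (boolP [exists n, i n != b n]) => [/existsP//|/existsPn h].
exfalso; move/eqP: hb; apply; apply/ffunP => n; apply/eqP; move: (h n).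
by rewrite negbK eq_sym.
Qed.

Lemma G_diag X (M : mats) i : (forall n a b, a != b -> M n a b = 0) ->
  G X M i = (\prod_(n < N) M n (i n) (i n)) * X i.
Proof.
move=> hM; rewrite /G (bigD1 i) //= [X in _ + X]big1 ?addr0 // => b hb.
have [n hn] := neq_idx hb.
by rewrite (bigD1 n) //= hM // !mul0r.
Qed.

Lemma G_id X : G X (fun n => 1%:M) = X.
Proof.
apply: functional_extensionality => i; rewrite G_diag.
  by rewrite big1 ?mul1r // => n _; rewrite mxE eqxx.
by move=> n a b h; rewrite mxE (negbTE h).
Qed.

Lemma G_mode X n A : mode_prod X n A = G X (upd1 n A).
Proof.
apply: functional_extensionality => i; rewrite /mode_prod /G.
rewrite (partition_big (fun b : idx => b n) xpredT) //=.
apply: eq_bigr => a _.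
rewrite (bigD1 (setc i n a)) /=; last by rewrite /setc ffunE dfwith_in.
rewrite [X in _ + X]big1 ?addr0.
  congr (_ * _); rewrite (bigD1 n) //= /upd1 dfwith_in /setc ffunE dfwith_in.
  rewrite big1 ?mulr1 // => m hm.
  by rewrite dfwith_out 1?eq_sym // ffunE dfwith_out 1?eq_sym // mxE eqxx.
move=> b /andP [/eqP hbn hb].
have [m hm] : exists m, (m != n) && (i m != b m).
  case: (boolP [exists m, (m != n) && (i m != b m)]) => [/existsP//|/existsPn h].
  exfalso; move/eqP: hb; apply; apply/ffunP => m; rewrite /setc ffunE.
  have [<-|mn] := eqVneq n m; first by rewrite dfwith_in.
  rewrite dfwith_out //; move: (h m); rewrite negb_and negbK eq_sym (negbTE mn) /=.
  by move=> /negPn /eqP ->.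
case/andP: hm => hmn hm.
rewrite (bigD1 m) //= /upd1 dfwith_out 1?eq_sym // mxE (negbTE hm).
by rewrite !mul0r.
Qed.

Lemma foldl_G (M : mats) s X : uniq s ->
  foldl (fun Y n => mode_prod Y n (M n)) X s =
  G X (fun m => if m \in s then M m else 1%:M).
Proof.
elim: s X => [|n s IH] X /=.
  by move=> _; rewrite G_id.
case/andP => ns us; rewrite IH // G_mode.
apply: G_comp => m; rewrite inE.
have [<-|nm] := eqVneq n m.
  by rewrite (negbTE ns) /upd1 dfwith_in mul1mx.
by rewrite /= /upd1 dfwith_out // mulmx1.
Qed.

Lemma mprod_G X M : mprod X M = G X M.
Proof. by rewrite /mprod foldl_G ?enum_uniq //; apply: G_ext => m; rewrite mem_enum. Qed.

Lemma G_sub X Y M i : G (tsub X Y) M i = G X M i - G Y M i.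
Proof. by rewrite /G /tsub -sumrB; apply: eq_bigr => b _; rewrite mulrBr. Qed.

Lemma upd1_out n (A : 'M[R]_(I n)) m : m != n -> upd1 n A m = 1%:M.
Proof. by move=> h; rewrite /upd1 dfwith_out // eq_sym. Qed.

Lemma prod_upd1 n (C : 'M[R]_(I n)) (i b : idx) :
  \prod_(m < N) upd1 n C m (i m) (b m) =
  C (i n) (b n) * \prod_(m < N | m != n) (1%:M : 'M[R]_(I m)) (i m) (b m).
Proof.
rewrite (bigD1 n) //= /upd1 dfwith_in; congr (_ * _).
by apply: eq_bigr => m hm; rewrite dfwith_out // eq_sym.
Qed.

Lemma G_slotB X n (A B : 'M[R]_(I n)) i :
  G X (upd1 n (A - B)) i = G X (upd1 n A) i - G X (upd1 n B) i.
Proof.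
rewrite /G -sumrB; apply: eq_bigr => b _; rewrite -mulrBl; congr (_ * _).
by rewrite !prod_upd1 !mxE mulrDl mulNr.
Qed.

Lemma G_slot0 X n i : G X (upd1 n 0) i = 0.
Proof.
by rewrite /G big1 // => b _; rewrite prod_upd1 mxE !mul0r.
Qed.

Lemma G_upd1_1 X n : G X (upd1 n 1%:M) = X.
Proof.
rewrite -[RHS]G_id; apply: G_ext => m.
have [<-|nm] := eqVneq n m; first by rewrite /upd1 dfwith_in.
by rewrite upd1_out // eq_sym.
Qed.

Lemma ip_G X Z (A : mats) : ip (G X A) Z = ip X (G Z (fun n => (A n)^T)).
Proof.
rewrite /ip /G; under eq_bigr do rewrite big_distrl /=.
rewrite exchange_big; apply: eq_bigr => b _; rewrite big_distrr /=.
apply: eq_bigr => i _.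
have -> : \prod_(n < N) (A n)^T (b n) (i n) = \prod_(n < N) A n (i n) (b n).
  by apply: eq_bigr => n _; rewrite mxE.
by rewrite -mulrA mulrCA.
Qed.

Lemma orth X Y n (P1 P2 : 'M[R]_(I n)) : P1^T *m P2 = 0 ->
  ip (G X (upd1 n P1)) (G Y (upd1 n P2)) = 0.
Proof.
move=> h; rewrite ip_G (G_comp _ _ _ (upd1 n 0)).
  by rewrite /ip big1 // => i _; rewrite G_slot0 mulr0.
move=> m; have [<-|nm] := eqVneq n m; first by rewrite /upd1 !dfwith_in h.
by rewrite !upd1_out 1?eq_sym // trmx1 mulmx1.
Qed.

Lemma tnorm2_ge0 (X : tensor R I) : 0 <= tnorm2 X.
Proof. by apply: sumr_ge0 => i _; rewrite sqr_ge0. Qed.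

Lemma pythag (A B : tensor R I) : ip A B = 0 ->
  tnorm2 (fun i => A i + B i) = tnorm2 A + tnorm2 B.
Proof.
move=> h; rewrite /tnorm2.
under eq_bigr do rewrite sqrrD.
rewrite !big_split /=.
have -> : \sum_(i : idx) A i * B i = 0 by exact: h.
by rewrite addr0 addr0.
Qed.


Lemma trmx1B m (P : 'M[R]_m) : P^T = P -> (1%:M - P)^T = 1%:M - P.
Proof. by move=> h; rewrite linearB /= trmx1 h. Qed.

Lemma proj_contract n (P : 'M[R]_(I n)) X : P^T = P -> P *m P = P ->
  tnorm2 (G X (upd1 n P)) <= tnorm2 X.
Proof.
move=> hs hi.
have E : forall i, X i = G X (upd1 n P) i + G X (upd1 n (1%:M - P)) i.
  by move=> i; rewrite G_slotB G_upd1_1 addrC subrK.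
have -> : tnorm2 X = tnorm2 (fun i => G X (upd1 n P) i + G X (upd1 n (1%:M - P)) i).
  by apply: eq_bigr => i _; rewrite -E.
rewrite pythag ?lerDl ?tnorm2_ge0 //.
by apply: orth; rewrite hs mulmxBr mulmx1 hi subrr.
Qed.

Lemma G_comm X m n (A : 'M[R]_(I m)) (B : 'M[R]_(I n)) : m != n ->
  G (G X (upd1 m A)) (upd1 n B) = G (G X (upd1 n B)) (upd1 m A).
Proof.
move=> mn.
rewrite (G_comp _ _ _ (fun j => upd1 n B j *m upd1 m A j)) //.
rewrite (G_comp _ _ _ (fun j => upd1 n B j *m upd1 m A j)) //.
move=> j; have [<-|jm] := eqVneq m j.
  by rewrite (upd1_out _ B _ mn) mulmx1 mul1mx.
have jm' : j != m by rewrite eq_sym.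
by rewrite (upd1_out _ A _ jm') mulmx1 mul1mx.
Qed.

Section Hosvd.
Variables (Q : mats) (hQs : forall n, (Q n)^T = Q n) (hQi : forall n, Q n *m Q n = Q n).
Definition MS (S : {set 'I_N}) : mats := fun m => if m \in S then Q m else 1%:M.

Lemma hosvd k : forall (S : {set 'I_N}) Y, #|S| = k ->
  tnorm2 (tsub Y (G Y (MS S))) <= \sum_(n in S) tnorm2 (G Y (upd1 n (1%:M - Q n))).
Proof.
elim: k => [|k IH] S Y hS.
  have -> : S = set0 by apply/eqP; rewrite -cards_eq0 hS.
  have -> : G Y (MS set0) = Y.
    by rewrite -[RHS]G_id; apply: G_ext => m; rewrite /MS in_set0.
  rewrite big_set0 /tnorm2 big1 // => i _.
  by rewrite /tsub subrr expr2 mul0r.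
have [n nS] : exists n, n \in S.
  by apply/set0Pn; rewrite -cards_eq0 hS.
set S' := S :\ n.
have hS' : #|S'| = k by move: hS; rewrite (cardsD1 n) nS add1n => [[]].
set Z := G Y (upd1 n (Q n)).
have hMS : forall m, MS S m = upd1 n (Q n) m *m MS S' m /\
                     MS S m = MS S' m *m upd1 n (Q n) m.
  move=> m; rewrite /MS /S' in_setD1; have [<-|nm] := eqVneq n m.
    by rewrite nS /upd1 dfwith_in mulmx1 mul1mx.
  have mn : m != n by rewrite eq_sym.
  by rewrite /= upd1_out // mulmx1 mul1mx.
have E1 : G Y (MS S) = G Z (MS S').
  by symmetry; apply: G_comp => m; case: (hMS m).
have E2 : G (G Y (MS S')) (upd1 n (Q n)) = G Z (MS S').
  by rewrite -E1; apply: G_comp => m; case: (hMS m).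
set a := G Y (upd1 n (1%:M - Q n)).
set b := G (tsub Y (G Y (MS S'))) (upd1 n (Q n)).
have Eab : forall i, tsub Y (G Y (MS S)) i = a i + b i.
  move=> i; rewrite /a /b G_slotB G_upd1_1 G_sub E2 E1 /tsub.
  by rewrite addrA subrK.
have -> : tnorm2 (tsub Y (G Y (MS S))) = tnorm2 (fun i => a i + b i).
  by apply: eq_bigr => i _; rewrite Eab.
rewrite pythag; last first.
  by apply: orth; rewrite trmx1B // mulmxBl mul1mx hQi subrr.
rewrite (bigD1 n) //= lerD2l.
have -> : tnorm2 b = tnorm2 (tsub Z (G Z (MS S'))).
  by apply: eq_bigr => i _; rewrite /b G_sub E2.
apply: le_trans (IH S' Z hS') _.
rewrite [X in _ <= X](eq_bigl (fun m => m \in S')); last first.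
  by move=> m; rewrite /S' in_setD1 andbC.
apply: ler_sum => m; rewrite /S' in_setD1 => /andP [mn _].
rewrite /Z G_comm //.
  exact: proj_contract.
by rewrite eq_sym.
Qed.

End Hosvd.

Lemma proj_of m (Gm P : 'M[R]_m) r : top_lsv_proj Gm r P -> P^T = P /\ P *m P = P.
Proof.
case=> U [d [hU _ _ ->]]; split.
  by rewrite !trmx_mul trmxK tr_pid_mx mulmxA.
rewrite !mulmxA -(mulmxA (U *m pid_mx r) U^T U) hU mulmx1.
by rewrite -(mulmxA U) mul_pid_mx minnn pid_mx_minv.
Qed.

Definition ind {K : nat} (J : forall n : 'I_N, 'I_K -> {set 'I_(I n)}) k (i : idx) : R :=
  \prod_(n < N) ((i n \in J n k)%:R : R).

Lemma ind_val {K J} k i : @ind K J k i = if [forall n, i n \in J n k] then 1 else 0.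
Proof.
case: (boolP [forall n, i n \in J n k]) => [/forallP h|].
  by rewrite /ind big1 // => n _; rewrite h.
rewrite negb_forall => /existsP [n hn].
by rewrite /ind (bigD1 n) //= (negbTE hn) mul0r.
Qed.

Lemma ind_idem {K J} k i : @ind K J k i * ind J k i = ind J k i.
Proof. by rewrite ind_val; case: ifP; rewrite ?mulr1 ?mulr0. Qed.

Lemma part_unique {K J} (HJ : block_partition J) i :
  exists k0, @ind K J k0 i = 1 /\ forall k, k != k0 -> ind J k i = 0.
Proof.
case: HJ => [ex un]; case: (ex i) => k0 hk0; exists k0; split.
  by rewrite ind_val; case: forallP.
move=> k hk; rewrite ind_val; case: forallP => // h.
by move: hk; rewrite (un i k k0 h hk0) eqxx.
Qed.

Lemma sum_ind {K J} (HJ : block_partition J) i : \sum_(k < K) @ind K J k i = 1.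
Proof.
have [k0 [h1 h0]] := part_unique HJ i.
by rewrite (bigD1 k0) //= h1 big1 ?addr0 // => k hk; rewrite h0.
Qed.

Lemma G_restr {K J} k X i :
  G X (fun n => restr R (J n k)) i = @ind K J k i * X i.
Proof.
rewrite G_diag; last by move=> n a b h; rewrite /restr !mxE (negbTE h) mulr0n.
by congr (_ * _); apply: eq_bigr => n _; rewrite /restr !mxE eqxx mulr1n.
Qed.

End S.

Arguments proj_of {R m Gm P r}.
Arguments G {R N I}.
Arguments upd1 {R N I}.
Arguments ind {R N I K}.
Arguments MS {R N I}.
Arguments mprod_G {R N I}.
Arguments G_restr {R N I K J}.
Arguments G_comp {R N I}.
Arguments hosvd {R N I Q} hQs hQi {k} S Y.
Arguments G_mode {R N I}.
Arguments upd1_out {R N I}.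
Arguments part_unique {R N I K J}.
Arguments sum_ind {R N I K J}.
Arguments ind_idem {R N I K J}.
Arguments ind_val {R N I K J}.
Arguments G_ext {R N I}.

Theorem lemma3 (R : realFieldType) (N : nat) (I : 'I_N -> nat) (K : nat)
  (X : tensor R I)
  (r rbar rt : 'I_N -> nat)
  (P : forall n : 'I_N, 'M[R]_(I n))
  (HP : forall n, top_lsv_proj (mode_gram X n) (r n) (P n))
  (J : forall n : 'I_N, 'I_K -> {set 'I_(I n)})
  (HJ : block_partition J)
  (rk : forall n : 'I_N, 'I_K -> nat)
  (Q : forall n : 'I_N, 'I_K -> 'M[R]_(I n))
  (Jt : forall n : 'I_N, 'I_K -> {set 'I_(I n)})
  (HJt : block_partition Jt)
  (Pt : forall n : 'I_N, 'M[R]_(I n))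
  (f : 'I_K -> 'I_K) :
  let Xhat0 := mprod X P in
  let W0 := tsub X Xhat0 in
  let Rm := fun n k => restr R (J n k) in
  let Rt := fun n k => restr R (Jt n k) in
  let Xk := fun k => mprod W0 (fun n => Rm n k) in
  let Xhat1 := fun i => \sum_(k < K) mprod W0 (fun n => Q n k) i in
  (forall n k, top_lsv_proj (mode_gram (Xk k) n) (rk n k) (Q n k)) ->
  (forall n k, Rm n k *m Q n k = Q n k) ->
  (forall n, top_lsv_proj (mode_gram W0 n) (rt n) (Pt n)) ->
  (forall n, (rbar n <= rt n)%N /\ (r n <= rbar n)%N) ->
  bijective f ->
  (forall k : 'I_K,
     \sum_(n < N) tnorm2 (mode_prod (Xk k) n (1%:M - Q n k))
     <= \sum_(n < N) tnorm2
          (mprod (mode_prod W0 n (Rt n (f k) *m (1%:M - Pt n)))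
                 (fun m => if m == n then 1%:M else Rt m (f k)))) ->
  tnorm2 (tsub W0 Xhat1) <= \sum_(n < N) tnorm2 (mode_prod W0 n (1%:M - Pt n)).
Proof.
move=> Xhat0 W0 Rm Rt Xk Xhat1 hQ hRQ _ _ hf hyp.
have Qs n k : (Q n k)^T = Q n k by case: (proj_of (hQ n k)).
have Qi n k : Q n k *m Q n k = Q n k by case: (proj_of (hQ n k)).
have QR n k : Q n k *m Rm n k = Q n k.
  have h := congr1 trmx (hRQ n k); rewrite trmx_mul !Qs in h.
  by move: h; rewrite /Rm /restr tr_diag_mx.
have hXk k i : Xk k i = ind J k i * W0 i by rewrite /Xk mprod_G G_restr.
pose Yk k := G W0 (fun n => Q n k).
have hY1 k : Yk k = G (Xk k) (fun n => Q n k).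
  by rewrite /Xk mprod_G (G_comp _ _ _ (fun n => Q n k)) // => n; rewrite QR.
have hY2 k i : Yk k i = ind J k i * Yk k i.
  rewrite -G_restr /Yk (G_comp _ _ _ (fun n => Q n k)) //.
  by move=> n; rewrite hRQ.
pose D k := tsub (Xk k) (Yk k).
have hD i : tsub W0 Xhat1 i = \sum_(k < K) D k i.
  rewrite /tsub /Xhat1 sumrB; congr (_ - _).
    by under eq_bigr do rewrite hXk; rewrite -big_distrl /= sum_ind // mul1r.
  by apply: eq_bigr => k _; rewrite mprod_G.
have hDind k i : D k i = ind J k i * D k i.
  change (Xk k i - Yk k i = ind J k i * (Xk k i - Yk k i)).
  by rewrite hXk [RHS]mulrBr mulrA ind_idem -hY2.
have step1 : tnorm2 (tsub W0 Xhat1) = \sum_(k < K) tnorm2 (D k).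
  rewrite /tnorm2 exchange_big /=; apply: eq_bigr => i _; rewrite hD.
  have := @part_unique R N I K J HJ i; case=> k0 [h1 h0].
  have Dz k : k != k0 -> D k i = 0 by move=> hk; rewrite hDind h0 // mul0r.
  rewrite (bigD1 k0) //= big1 ?addr0; last by move=> k hk; rewrite Dz.
  rewrite [RHS](bigD1 k0) //= big1 ?addr0 //.
  by move=> k hk; rewrite Dz // expr2 mul0r.
rewrite step1.
apply: (@le_trans _ _ (\sum_(k < K) \sum_(n < N) tnorm2 (mode_prod (Xk k) n (1%:M - Q n k)))).
  apply: ler_sum => k _.
  have -> : tnorm2 (D k) = tnorm2 (tsub (Xk k) (G (Xk k) (MS (fun n => Q n k) setT))).
    apply: eq_bigr => i _; rewrite /D hY1; congr (_ ^+ 2); congr (_ - _).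
    by rewrite (G_ext _ (fun n => Q n k) (MS (fun n => Q n k) setT)) // => n; rewrite /MS in_setT.
  apply: le_trans (hosvd (fun n => Qs n k) (fun n => Qi n k) setT (Xk k) (erefl _)) _.
  rewrite (eq_bigl (fun n => true)); last by move=> n; rewrite in_setT.
  by apply: ler_sum => n _; rewrite G_mode.
apply: le_trans (ler_sum _ (fun k _ => hyp k)) _.
rewrite exchange_big /=; rewrite le_eqVlt; apply/orP; left; apply/eqP; apply: eq_bigr => n _.
set Z := mode_prod W0 n (1%:M - Pt n).
have hT k i : mprod (mode_prod W0 n (Rt n (f k) *m (1%:M - Pt n)))
                 (fun m => if m == n then 1%:M else Rt m (f k)) i = ind Jt (f k) i * Z i.
  rewrite mprod_G !G_mode /Z -G_restr.
  rewrite (G_comp _ _ _ (fun m => Rt m (f k) *m upd1 n (1%:M - Pt n) m)).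
    by rewrite G_mode (G_comp _ _ _ (fun m => Rt m (f k) *m upd1 n (1%:M - Pt n) m)) // => m.
  move=> m; have [<-|nm] := eqVneq n m.
    by rewrite /upd1 !dfwith_in mul1mx.
  have mn : m != n by rewrite eq_sym.
  by rewrite !upd1_out.
transitivity (\sum_(k < K) tnorm2 (fun i => ind Jt (f k) i * Z i)).
  by apply: eq_bigr => k _; apply: eq_bigr => i _; rewrite hT.
transitivity (\sum_(k < K) tnorm2 (fun i => ind Jt k i * Z i)).
  by rewrite [RHS](reindex_inj (bij_inj hf)).
rewrite /tnorm2 exchange_big /=; apply: eq_bigr => i _.
under eq_bigr do rewrite exprMn expr2 ind_idem.
by rewrite -big_distrl /= sum_ind // mul1r.
Qed.
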